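(* Under the hypotheses of the $O(\tau)$ convergence theorem, the limit curve $X:[0,\infty)\to\mathbb H$ of $\underline X_t^\tau$ is locally absolutely continuous in $\mathbb H$ and solves \[\dot X(t)=-\nabla\phi^{\#}_{\rho_0}(X(t))\ \text{ for a.e. }t\in(0,\infty),\qquad X(0)=\mathrm{Id},\] where $\dot X$ is the Fréchet (time) derivative of $X:[0,\infty)\to\mathbb H$.
   Context: Hypotheses of the $O(\tau)$ convergence theorem: the standing hypotheses (S) below hold for every $\tau$ in a family $\tau\downarrow0$ (and $|\lambda|\tau<1$ if $\lambda<0$), with $\lim_{\tau\downarrow0}\|X_0^\tau-\mathrm{Id}\|_{\mathbb H}=0$ and $\sup_\tau\|\nabla\phi^{\#}_{\rho_0}(X_0^\tau)\|_{\mathbb H}<\infty$; $\underline X_t^\tau:=X_n^\tau$ for $t\in[n\tau,(n+1)\tau)$, and $\underline X^\tau$ converges locally uniformly in $\mathbb H$ to a locally Lipschitz curve $X$. Standing hypotheses (S): $\rho_0\in\mathcal P_2(\mathbb R^d)$; $\mathbb H=L^2(\mathbb R^d;\rho_0)$ is the Hilbert space of $\rho_0$-square-integrable maps $\mathbb R^d\to\mathbb R^d$; $\phi:\mathcal P_2(\mathbb R^d)\to\mathbb R$ has lift $\phi^{\#}_{\rho_0}(\xi):=\phi(\xi_{\#}\rho_0)$ which is Fréchet differentiable on $\mathbb H$ (gradient $\nabla\phi^{\#}_{\rho_0}$), $\lambda$-convex on $\mathbb H$ for some $\lambda\in\mathbb R$, and $\inf_{\mathbb H}\phi^{\#}_{\rho_0}>-\infty$;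 $\tau>0$ satisfies $\lambda/2+1/\tau>0$. Scheme: $X_{n+1}^\tau$ is the unique minimizer over $\xi\in\mathbb H$ of $\tfrac12\phi^{\#}_{\rho_0}(\xi)+\tfrac12\langle\nabla\phi^{\#}_{\rho_0}(X_n^\tau),\xi\rangle_{\mathbb H}+\tfrac1{2\tau}\|\xi-X_n^\tau\|^2_{\mathbb H}$. *)

(* Defs.v *)
From HB Require Import structures.
From mathcomp Require Import all_boot all_order all_algebra.
From mathcomp Require Import all_classical all_reals all_analysis.
Set Implicit Arguments. Unset Strict Implicit. Unset Printing Implicit Defensive.
Import Order.TTheory GRing.Theory Num.Theory.
Import numFieldNormedType.Exports.
Local Open Scope classical_set_scope.
Local Open Scope ring_scope.

Definition BRd (R : realType) (d : nat) :=
  g_sigma_algebraType (@open 'rV[R]_d).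

Definition dotRd (R : realType) (d : nat) (x y : 'rV[R]_d) : R :=
  \sum_(i < d) x ord0 i * y ord0 i.
Definition sqnRd (R : realType) (d : nat) (x : 'rV[R]_d) : R := dotRd x x.

Definition finite_second_moment (R : realType) (d : nat)
  (rho0 : probability (BRd R d) R) : Prop :=
  (\int[rho0]_x (sqnRd (x : 'rV[R]_d))%:E < +oo)%E.

(* The Hilbert space H = L^2(R^d; rho0; R^d), represented by its elements
   (Borel maps R^d -> R^d that are rho0-square-integrable); equality in H is
   rho0-a.e. equality, i.e. distance 0 for the norm below. *)
Definition inH (R : realType) (d : nat) (rho0 : probability (BRd R d) R)
  (xi : BRd R d -> BRd R d) : Prop :=
  measurable_fun setT xi /\ (\int[rho0]_x (sqnRd (xi x : 'rV[R]_d))%:E < +oo)%E.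

Definition ipH (R : realType) (d : nat) (rho0 : probability (BRd R d) R)
  (xi eta : BRd R d -> BRd R d) : R :=
  fine (\int[rho0]_x (dotRd (xi x : 'rV[R]_d) (eta x))%:E)%E.

Definition normH (R : realType) (d : nat) (rho0 : probability (BRd R d) R)
  (xi : BRd R d -> BRd R d) : R :=
  Num.sqrt (fine (\int[rho0]_x (sqnRd (xi x : 'rV[R]_d))%:E)%E).

Definition addH (R : realType) (d : nat) (xi eta : BRd R d -> BRd R d)
  : BRd R d -> BRd R d := fun x => ((xi x : 'rV[R]_d) + eta x).
Definition subH (R : realType) (d : nat) (xi eta : BRd R d -> BRd R d)
  : BRd R d -> BRd R d := fun x => ((xi x : 'rV[R]_d) - eta x).
Definition scaleH (R : realType) (d : nat) (s : R) (xi : BRd R d -> BRd R d)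
  : BRd R d -> BRd R d := fun x => s *: (xi x : 'rV[R]_d).
Definition IdH (R : realType) (d : nat) : BRd R d -> BRd R d := fun x => x.

(* The lift phi#_{rho0}(xi) := phi(xi_# rho0).  phi is a function of the law
   (a set function on Borel sets of R^d); only its values on laws xi_# rho0,
   xi in H, i.e. on elements of P_2(R^d), ever matter. *)
Definition phi_lift (R : realType) (d : nat) (rho0 : probability (BRd R d) R)
  (phi : (set (BRd R d) -> \bar R) -> R) (xi : BRd R d -> BRd R d) : R :=
  phi (pushforward rho0 xi).

Definition frechet_gradient_on_H (R : realType) (d : nat)
  (rho0 : probability (BRd R d) R) (F : (BRd R d -> BRd R d) -> R)
  (G : (BRd R d -> BRd R d) -> (BRd R d -> BRd R d)) : Prop :=
  forall xi, inH rho0 xi ->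
    inH rho0 (G xi) /\
    forall eps : R, 0 < eps -> exists2 delta : R, 0 < delta &
      forall h, inH rho0 h -> normH rho0 h < delta ->
        `| F (addH xi h) - F xi - ipH rho0 (G xi) h | <= eps * normH rho0 h.

Definition lambda_convex_on_H (R : realType) (d : nat)
  (rho0 : probability (BRd R d) R) (lam : R)
  (F : (BRd R d -> BRd R d) -> R) : Prop :=
  forall xi eta, inH rho0 xi -> inH rho0 eta ->
  forall s : R, 0 <= s <= 1 ->
    F (addH (scaleH (1 - s) xi) (scaleH s eta))
      <= (1 - s) * F xi + s * F eta
         - lam / 2 * s * (1 - s) * normH rho0 (subH xi eta) ^+ 2.

Definition scheme_objective (R : realType) (d : nat)
  (rho0 : probability (BRd R d) R) (F : (BRd R d -> BRd R d) -> R)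
  (G : (BRd R d -> BRd R d) -> (BRd R d -> BRd R d)) (tau : R)
  (Xn xi : BRd R d -> BRd R d) : R :=
  1 / 2 * F xi + 1 / 2 * ipH rho0 (G Xn) xi
  + 1 / (2 * tau) * normH rho0 (subH xi Xn) ^+ 2.

(* Y is the unique (in H, i.e. up to rho0-a.e. equality) minimiser over H. *)
Definition unique_minimizer_H (R : realType) (d : nat)
  (rho0 : probability (BRd R d) R) (J : (BRd R d -> BRd R d) -> R)
  (Y : BRd R d -> BRd R d) : Prop :=
  inH rho0 Y /\ (forall xi, inH rho0 xi -> J Y <= J xi) /\
  (forall xi, inH rho0 xi -> J xi <= J Y -> normH rho0 (subH xi Y) = 0).

Definition interp (R : realType) (d : nat) (tau : R)
  (Xn : nat -> BRd R d -> BRd R d) (t : R) : BRd R d -> BRd R d :=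
  Xn (Num.truncn (t / tau)).

Definition loc_abs_cont_H (R : realType) (d : nat)
  (rho0 : probability (BRd R d) R) (X : R -> BRd R d -> BRd R d) : Prop :=
  forall T : R, 0 < T -> forall eps : R, 0 < eps ->
  exists2 delta : R, 0 < delta &
    forall (n : nat) (a b : nat -> R),
      (forall i, (i < n)%N -> 0 <= a i /\ a i <= b i /\ b i <= T) ->
      (forall i j, (i < n)%N -> (j < n)%N -> i <> j ->
          b i <= a j \/ b j <= a i) ->
      \sum_(i < n) (b i - a i) < delta ->
      \sum_(i < n) normH rho0 (subH (X (b i)) (X (a i))) < eps.

Definition time_deriv_H (R : realType) (d : nat)
  (rho0 : probability (BRd R d) R) (X : R -> BRd R d -> BRd R d) (t : R)
  (v : BRd R d -> BRd R d) : Prop :=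
  forall eps : R, 0 < eps -> exists2 delta : R, 0 < delta &
    forall h : R, 0 < `|h| < delta -> 0 <= t + h ->
      normH rho0 (subH (subH (X (t + h)) (X t)) (scaleH h v)) <= eps * `|h|.

(* Main.v *)
Require Import Defs.
From HB Require Import structures.
From mathcomp Require Import all_boot all_order all_algebra.
From mathcomp Require Import all_classical all_reals all_analysis.
From mathcomp Require Import ring lra.
From mathcomp Require Import measurable_realfun.
From mathcomp Require Import zify.
Import Order.TTheory GRing.Theory Num.Theory.
Import numFieldNormedType.Exports.
Local Open Scope classical_set_scope.
Local Open Scope ring_scope.

Section Meas.
Variables (R : realType) (d : nat).
Local Notation V := (BRd R d).

Lemma BRd_open (U : set 'rV[R]_d) : open U -> measurable (U : set V).
Proof. by move=> oU; apply: sub_sigma_algebra. Qed.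

Lemma proj_meas (j : 'I_d) : measurable_fun setT (fun x : V => (x : 'rV[R]_d) ord0 j).
Proof.
apply: (@measurability _ _ V R setT _ _ (measurable_realfun.RGenOpens.measurableE R)).
move=> _ [_ [a [b ->]] <-]; rewrite setTI; apply: BRd_open.
have := @coord_continuous R 1 d ord0 j => /continuousP; apply.
exact: interval_open.
Qed.

Lemma coord_meas dT (T' : measurableType dT) (f : T' -> V) :
  measurable_fun setT f -> forall j, measurable_fun setT (fun x => (f x : 'rV[R]_d) ord0 j).
Proof. by move=> mf j; exact: (measurableT_comp (proj_meas j) mf). Qed.

Definition piece dT (T' : measurableType dT) (f : T' -> V) (U : set 'rV[R]_d)
  (i : ('rV[rat]_d * rat)%type) : set T' :=
  [set x | ((0 : R) < ratr i.2 /\ forall z : 'rV[R]_d,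
      (forall j, ball (ratr (i.1 ord0 j) : R) (ratr i.2) (z ord0 j)) -> U z) /\
    forall j, ball (ratr (i.1 ord0 j) : R) (ratr i.2) ((f x : 'rV[R]_d) ord0 j)].

Arguments piece {dT T'}.
Lemma meas_of_coord dT (T' : measurableType dT) (f : T' -> V) :
  (forall j, measurable_fun setT (fun x => (f x : 'rV[R]_d) ord0 j)) ->
  measurable_fun setT f.
Proof.
move=> mf.
apply: (@measurability _ _ T' V setT f (@open 'rV[R]_d) erefl).
move=> _ [U oU <-]; rewrite setTI.
have -> : f @^-1` U = \bigcup_i piece f U i.
  apply/seteqP; split => x /=; last first.
    by move=> [i _ [[_ H1] H2]]; apply: H1.
  move=> Ufx.
  have : nbhs (f x : 'rV[R]_d) U by apply: oU.
  move=> /nbhs_ballP [e e0 He].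
  have [r /andP[]] : exists r : rat, (ratr r : R) \in `]0, e / 2[.
    by apply: rat_in_itvoo; rewrite divr_gt0.
  rewrite !bnd_simp => r0 re.
  have [qf Hq] : exists qf : 'I_d -> rat, forall j,
      ball (ratr (qf j) : R) (ratr r) ((f x : 'rV[R]_d) ord0 j).
    apply: (@fin_all_exists _ (fun=> rat) (fun j q => ball (ratr q : R) (ratr r) ((f x : 'rV[R]_d) ord0 j))) => j.
    have [q /andP[]] : exists q : rat, (ratr q : R) \in
        `](f x : 'rV[R]_d) ord0 j - ratr r, (f x : 'rV[R]_d) ord0 j + ratr r[.
      by apply: rat_in_itvoo; rewrite ltrBlDr -addrA ltrDl addr_gt0.
    rewrite !bnd_simp => h1 h2; exists q.
    rewrite -ball_normE /= ltr_norml; apply/andP; split; lra.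
  exists (\row_j qf j, r) => //; split; last by move=> j /=; rewrite mxE.
  split => // z Hz; apply: He.
  split => // i j; rewrite (ord1 i).
  have h1 := Hq j; have h2 := Hz j; rewrite /= mxE in h2.
  rewrite -ball_normE /= in h1 h2 *.
  rewrite (splitr e); apply: (le_lt_trans (ler_distD (ratr (qf j)) _ _)).
  rewrite distrC; apply: ltrD.
    by apply: lt_trans re.
  by apply: lt_trans re.
apply: countable_bigcupT_measurable; first exact: countableP.
case=> q r; rewrite /piece /=.
have [c|nc] := pselect ((0 : R) < ratr r /\ forall z : 'rV[R]_d,
      (forall j, ball (ratr (q ord0 j) : R) (ratr r) (z ord0 j)) -> U z).
  have -> : [set x | ((0 : R) < ratr r /\ forall z : 'rV[R]_d,
      (forall j, ball (ratr (q ord0 j) : R) (ratr r) (z ord0 j)) -> U z) /\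
    forall j, ball (ratr (q ord0 j) : R) (ratr r) ((f x : 'rV[R]_d) ord0 j)] =
    \bigcap_(j in [set: 'I_d]) ((fun x => (f x : 'rV[R]_d) ord0 j) @^-1`
         ball (ratr (q ord0 j) : R) (ratr r)).
    apply/seteqP; split => x /=; first by move=> [_ H] j _; apply: H.
    by move=> H; split => // j; apply: H.
  apply: fin_bigcap_measurable; first exact: finite_finset.
  move=> j _; rewrite -[X in measurable X]setTI; apply: (mf j measurableT).
  exact: (measurable_realfun.open_measurable (ball_open _ _)).
have -> : [set x | ((0 : R) < ratr r /\ forall z : 'rV[R]_d,
      (forall j, ball (ratr (q ord0 j) : R) (ratr r) (z ord0 j)) -> U z) /\
    forall j, ball (ratr (q ord0 j) : R) (ratr r) ((f x : 'rV[R]_d) ord0 j)] = set0.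
  by apply/seteqP; split => x //= [].
exact: measurable0.
Qed.
End Meas.
Section Pt.
Variables (R : realType) (d : nat).
Implicit Types (u v w : 'rV[R]_d) (s : R).

Lemma dot_sym u v : dotRd u v = dotRd v u.
Proof. by rewrite /dotRd; apply: eq_bigr => i _; rewrite mulrC. Qed.

Lemma dotDl u v w : dotRd (u + v) w = dotRd u w + dotRd v w.
Proof. by rewrite /dotRd -big_split; apply: eq_bigr => i _; rewrite mxE mulrDl. Qed.

Lemma dotZl s u w : dotRd (s *: u) w = s * dotRd u w.
Proof. by rewrite /dotRd mulr_sumr; apply: eq_bigr => i _; rewrite mxE mulrA. Qed.

Lemma sqn_ge0 u : 0 <= sqnRd u.
Proof. by rewrite /sqnRd /dotRd; apply: sumr_ge0 => i _; rewrite -expr2 sqr_ge0. Qed.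

Lemma dot_bound u v : `|dotRd u v| <= sqnRd u + sqnRd v.
Proof.
rewrite /sqnRd /dotRd -big_split /=.
apply: (le_trans (ler_norm_sum _ _ _)); apply: ler_sum => i _.
set x := u ord0 i; set y := v ord0 i.
rewrite normrM; have := sqr_ge0 (`|x| - `|y|).
have hx : `|x| ^+ 2 = x * x by rewrite real_normK ?num_real // expr2.
have hy : `|y| ^+ 2 = y * y by rewrite real_normK ?num_real // expr2.
have := normr_ge0 x; have := normr_ge0 y.
nra.
Qed.

Lemma sqnZ s u : sqnRd (s *: u) = s ^+ 2 * sqnRd u.
Proof. by rewrite /sqnRd dotZl dot_sym dotZl mulrA expr2. Qed.

Lemma sqnD_le u v : sqnRd (u + v) <= 3 * sqnRd u + 3 * sqnRd v.
Proof.
rewrite /sqnRd dotDl !(dot_sym _ (u + v)) !dotDl.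
have := dot_bound u v; have := dot_bound v u; rewrite /sqnRd.
have := sqn_ge0 u; have := sqn_ge0 v; rewrite /sqnRd.
move=> h1 h2 /ler_normlP [h3 h4] /ler_normlP [h5 h6]; lra.
Qed.
End Pt.
Arguments dot_sym {R d}. Arguments dotDl {R d}. Arguments dotZl {R d}. Arguments sqn_ge0 {R d}. Arguments dot_bound {R d}. Arguments sqnZ {R d}. Arguments sqnD_le {R d}.

Section L2.
Variables (R : realType) (d : nat) (rho0 : probability (BRd R d) R).
Local Notation V := (BRd R d).
Local Notation inH := (inH rho0).
Local Notation ipH := (ipH rho0).
Local Notation normH := (normH rho0).
Implicit Types (a b c : V -> V).

Lemma dotf_meas a b : measurable_fun setT a -> measurable_fun setT b ->
  measurable_fun setT (fun x => dotRd (a x : 'rV[R]_d) (b x)).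
Proof.
move=> ma mb; rewrite /dotRd; apply: measurable_sum => i.
by apply: measurable_realfun.measurable_funM; apply: coord_meas.
Qed.

Lemma nn_int_lt (f : V -> R) : (forall x, 0 <= f x) ->
  rho0.-integrable setT (EFin \o f) -> (\int[rho0]_x (f x)%:E < +oo)%E.
Proof.
move=> f0 /integrableP [_]; congr (_ < _)%E; apply: eq_integral => x _.
by rewrite /comp abse_EFin ger0_norm.
Qed.

Lemma nn_lt_int (f : V -> R) : measurable_fun setT f -> (forall x, 0 <= f x) ->
  (\int[rho0]_x (f x)%:E < +oo)%E -> rho0.-integrable setT (EFin \o f).
Proof.
move=> mf f0 h; apply/integrableP; split; first exact/measurable_EFinP.
move: h; congr (_ < _)%E; apply: eq_integral => x _.
by rewrite /comp abse_EFin ger0_norm.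
Qed.

Lemma inH_meas a : inH a -> measurable_fun setT a.
Proof. by case. Qed.

Lemma sqn_int a : inH a -> rho0.-integrable setT (EFin \o (fun x => sqnRd (a x : 'rV[R]_d))).
Proof.
move=> [ma h]; apply: nn_lt_int => // x; first exact: dotf_meas.
exact: sqn_ge0.
Qed.

Lemma dot_int a b : inH a -> inH b ->
  rho0.-integrable setT (EFin \o (fun x => dotRd (a x : 'rV[R]_d) (b x))).
Proof.
move=> ha hb.
have hg := integrableD measurableT (sqn_int _ ha) (sqn_int _ hb).
apply: (le_integrable measurableT _ _ hg) => //.
  by apply/measurable_EFinP; apply: dotf_meas; apply: inH_meas.
move=> x _ /=; rewrite lee_fin.
rewrite (ger0_norm (addr_ge0 (sqn_ge0 _) (sqn_ge0 _))).
exact: dot_bound.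
Qed.

Lemma inH_add a b : inH a -> inH b -> inH (addH a b).
Proof.
move=> ha hb; split.
  apply: meas_of_coord => j.
  rewrite /addH; under eq_fun do rewrite mxE.
  by apply: measurable_realfun.measurable_funD; apply: coord_meas; apply: inH_meas.
have mab : measurable_fun setT (fun x => sqnRd (addH a b x : 'rV[R]_d)).
  apply: dotf_meas; apply: meas_of_coord => j;
  rewrite /addH; under eq_fun do rewrite mxE;
  by apply: measurable_realfun.measurable_funD; apply: coord_meas; apply: inH_meas.
apply: nn_int_lt; first by move=> x; apply: sqn_ge0.
have hg := integrableD measurableT (integrableZl measurableT 3 (sqn_int _ ha))
   (integrableZl measurableT 3 (sqn_int _ hb)).
apply: (le_integrable measurableT _ _ hg) => //; first exact/measurable_EFinP.
move=> x _ /=; rewrite lee_fin.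
rewrite ger0_norm; last exact: sqn_ge0.
rewrite ger0_norm; last by apply: addr_ge0; apply: mulr_ge0 => //; exact: sqn_ge0.
exact: sqnD_le.
Qed.

Lemma inH_scale s a : inH a -> inH (scaleH s a).
Proof.
move=> ha; split.
  apply: meas_of_coord => j.
  rewrite /scaleH; under eq_fun do rewrite mxE.
  by apply: measurable_realfun.measurable_funM => //; apply: coord_meas; apply: inH_meas.
apply: nn_int_lt; first by move=> x; apply: sqn_ge0.
have hg := integrableZl measurableT (s ^+ 2) (sqn_int _ ha).
apply: (eq_integrable measurableT _ _ _ hg) => // x _ /=.
by rewrite /scaleH sqnZ.
Qed.

Lemma subHE a b : subH a b = addH a (scaleH (-1) b).
Proof. by apply/funext => x; rewrite /subH /addH /scaleH scaleN1r. Qed.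

Lemma inH_sub a b : inH a -> inH b -> inH (subH a b).
Proof. by move=> ha hb; rewrite subHE; apply: inH_add => //; apply: inH_scale. Qed.

Lemma ipD a b c : inH a -> inH b -> inH c -> ipH (addH a b) c = ipH a c + ipH b c.
Proof.
move=> ha hb hc; rewrite /Defs.ipH.
under eq_integral do rewrite /addH dotDl EFinD.
rewrite integralD //; try exact: dot_int.
by rewrite fineD //; apply: integrable_fin_num => //; exact: dot_int.
Qed.

Lemma ipZ s a c : inH a -> inH c -> ipH (scaleH s a) c = s * ipH a c.
Proof.
move=> ha hc; rewrite /Defs.ipH.
under eq_integral do rewrite /scaleH dotZl EFinM.
rewrite integralZl //; last exact: dot_int.
by rewrite fineM //; apply: integrable_fin_num => //; exact: dot_int.
Qed.

Lemma ip_sym a b : ipH a b = ipH b a.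
Proof. by rewrite /Defs.ipH; congr fine; apply: eq_integral => x _; rewrite dot_sym. Qed.

Lemma ip_ge0 a : 0 <= ipH a a.
Proof. by apply: fine_ge0; apply: integral_ge0 => x _; rewrite lee_fin; exact: sqn_ge0. Qed.

Lemma normE a : normH a = Num.sqrt (ipH a a).
Proof. by []. Qed.
End L2.
Arguments dotf_meas {R d a b}. Arguments nn_int_lt {R d rho0}. Arguments nn_lt_int {R d rho0}.
Arguments inH_meas {R d rho0 a}. Arguments sqn_int {R d rho0 a}. Arguments dot_int {R d rho0 a b}.
Arguments inH_add {R d rho0 a b}. Arguments inH_scale {R d rho0} s {a}. Arguments subHE {R d}.
Arguments inH_sub {R d rho0 a b}. Arguments ipD {R d rho0 a b c}. Arguments ipZ {R d rho0} s {a c}.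
Arguments ip_sym {R d rho0}. Arguments ip_ge0 {R d rho0}. Arguments normE {R d rho0}.
Arguments coord_meas {R d dT T'}. Arguments meas_of_coord {R d dT T'}.


Section Real.
Variable R : realType.
Implicit Types A B C : R.

Lemma quad_CS A B C : 0 <= C -> (forall t, 0 <= A + 2 * t * B + t ^+ 2 * C) ->
  B ^+ 2 <= A * C.
Proof.
move=> C0 H; have [Cp|] := ltP 0 C.
  have h := H (- (B / C)); set u := B / C in h.
  have hB : B = u * C by rewrite /u divfK // gt_eqF.
  rewrite hB in h *; nra.
move=> Cle; have C00 : C = 0 by apply/eqP; rewrite eq_le Cle C0.
rewrite C00 mulr0; have [B0|Bn] := eqVneq B 0; first by rewrite B0 expr0n.
have h := H (- (`|A| + 1) * B^-1 / 2).
have e : 2 * (- (`|A| + 1) * B^-1 / 2) * B = - (`|A| + 1) by field.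
rewrite C00 e mulr0 addr0 in h.
have := ler_norm A; lra.
Qed.

Lemma le_of_forall_gt0 (x y : R) : (forall e, 0 < e -> x <= y + e) -> x <= y.
Proof. by move=> h; apply/ler_addgt0Pr. Qed.

End Real.

Ltac veq := apply/funext => ?; apply/matrixP => ? ?;
  rewrite /addH /subH /scaleH /IdH ?mxE; ring.

Section HS.
Variables (R : realType) (d : nat) (rho0 : probability (BRd R d) R).
Local Notation V := (BRd R d).
Local Notation inH := (inH rho0).
Local Notation ip := (ipH rho0).
Local Notation nm := (normH rho0).
Implicit Types (a b c h : V -> V).

Lemma ipDr {a b c} : inH a -> inH b -> inH c -> ip c (addH a b) = ip c a + ip c b.
Proof. by move=> *; rewrite ip_sym ipD // !(ip_sym _ c). Qed.

Lemma ipZr s {a c} : inH a -> inH c -> ip c (scaleH s a) = s * ip c a.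
Proof. by move=> *; rewrite ip_sym ipZ // ip_sym. Qed.

Lemma nm_ge0 a : 0 <= nm a.
Proof. exact: sqrtr_ge0. Qed.

Lemma nm_sq a : nm a ^+ 2 = ip a a.
Proof. by rewrite normE sqr_sqrtr // ip_ge0. Qed.

Lemma ip_expand {a} s {h} : inH a -> inH h ->
  ip (addH a (scaleH s h)) (addH a (scaleH s h)) =
  ip a a + 2 * s * ip a h + s ^+ 2 * ip h h.
Proof.
move=> ha hh; have hs := inH_scale s hh.
have hah := inH_add ha hs.
rewrite (ipD (a:=a) (b:=scaleH s h)) // (ipDr (a:=a) (b:=scaleH s h) (c:=a)) // (ipDr (a:=a) (b:=scaleH s h) (c:=scaleH s h)) //.
rewrite (ipZr s (a:=h) (c:=a)) // (ipZ s (a:=h) (c:=a)) // (ipZ s (a:=h) (c:=scaleH s h)) //.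
rewrite (ipZr s (a:=h) (c:=h)) // (ip_sym h a); ring.
Qed.

Lemma CS {a b} : inH a -> inH b -> `|ip a b| <= nm a * nm b.
Proof.
move=> ha hb.
have q : ip a b ^+ 2 <= ip a a * ip b b.
  apply: quad_CS; first exact: ip_ge0.
  by move=> t; rewrite -ip_expand //; apply: ip_ge0.
rewrite -!nm_sq in q.
have ha0 := nm_ge0 a; have hb0 := nm_ge0 b.
rewrite -ler_sqr ?nnegrE ?mulr_ge0 // real_normK ?num_real // exprMn //.
Qed.

Lemma nm_add {a b} : inH a -> inH b -> nm (addH a b) <= nm a + nm b.
Proof.
move=> ha hb.
have e : addH a b = addH a (scaleH 1 b) by veq.
have h1 : nm (addH a b) ^+ 2 <= (nm a + nm b) ^+ 2.
  rewrite nm_sq e ip_expand // -!nm_sq.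
  have := CS ha hb; have := ler_norm (ip a b); nra.
have := nm_ge0 (addH a b); have := nm_ge0 a; have := nm_ge0 b; nra.
Qed.

Lemma nmZ s {a} : inH a -> nm (scaleH s a) = `|s| * nm a.
Proof.
move=> ha; have hs := inH_scale s ha.
rewrite !normE (ipZ s (a:=a) (c:=scaleH s a)) // (ipZr s (a:=a) (c:=a)) // mulrA -expr2.
by rewrite sqrtrM ?sqr_ge0 // sqrtr_sqr.
Qed.

Lemma nm_subC {a b} : inH a -> inH b -> nm (subH a b) = nm (subH b a).
Proof.
move=> ha hb; have -> : subH b a = scaleH (-1) (subH a b) by veq.
rewrite nmZ; last exact: inH_sub.
have -> : `|(-1 : R)| = 1 by rewrite normrN1.
by rewrite mul1r.
Qed.

Lemma nm_tri {a b c} : inH a -> inH b -> inH c ->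
  nm (subH a c) <= nm (subH a b) + nm (subH b c).
Proof.
move=> ha hb hc; have -> : subH a c = addH (subH a b) (subH b c) by veq.
by apply: nm_add; apply: inH_sub.
Qed.

Lemma nm0_ip a : inH a -> ip a a = 0 -> nm a = 0.
Proof. by move=> _ h; rewrite normE h sqrtr0. Qed.
End HS.
Arguments ipDr {R d rho0 a b c}. Arguments ipZr {R d rho0} s {a c}.
Arguments nm_ge0 {R d rho0}. Arguments nm_sq {R d rho0}.
Arguments ip_expand {R d rho0 a} s {h}. Arguments CS {R d rho0 a b}.
Arguments nm_add {R d rho0 a b}. Arguments nmZ {R d rho0} s {a}.
Arguments nm_subC {R d rho0 a b}. Arguments nm_tri {R d rho0 a b c}.
Arguments nm0_ip {R d rho0 a}.


Section Real2.
Variable R : realType.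

Lemma eq0_small (c : R) : (forall e, 0 < e -> `|c| <= e) -> c = 0.
Proof.
move=> h; apply/eqP; rewrite -normr_eq0 eq_le normr_ge0 andbT.
by apply/ler_addgt0Pr => e e0; rewrite add0r; apply: h.
Qed.

Lemma EL_core (c N P tau : R) : 0 <= N -> 0 <= P -> 0 < tau ->
  (forall e, 0 < e -> exists2 del, 0 < del & forall s, `|s| * N < del ->
     0 <= s / 2 * c + e * `|s| * N / 2 + s ^+ 2 * P / (2 * tau)) -> c = 0.
Proof.
move=> N0 P0 t0 H; apply: eq0_small => eps e0.
have N1 : 0 < 2 * (N + 1) by lra.
have P1 : 0 < 2 * (P + 1) by lra.
set e := eps / (2 * (N + 1)).
have e0' : 0 < e by rewrite divr_gt0.
have eE : e * (2 * (N + 1)) = eps by rewrite /e divfK // gt_eqF.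
have [del d0 Hd] := H e e0'.
set w1 := del / (2 * (N + 1)).
have w1E : w1 * (2 * (N + 1)) = del by rewrite /w1 divfK // gt_eqF.
have w10 : 0 < w1 by rewrite divr_gt0.
set w2 := eps * tau / (2 * (P + 1)).
have w2E : w2 * (2 * (P + 1)) = eps * tau by rewrite /w2 divfK // gt_eqF.
have w20 : 0 < w2 by rewrite divr_gt0 // mulr_gt0.
set sg := Num.min w1 w2.
have s0 : 0 < sg by rewrite lt_min w10 w20.
have s1 : sg <= w1 by rewrite ge_min lexx.
have s2 : sg <= w2 by rewrite ge_min lexx orbT.
have sN : sg * N < del by have h1 := ler_wpM2r N0 s1; nra.
have eN : e * N <= eps / 2 by nra.
set q := sg * P / tau.
have qE : q * tau = sg * P by rewrite /q divfK // gt_eqF.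
have q0 : 0 <= q by rewrite /q divr_ge0 ?mulr_ge0 // ltW.
have sP : q <= eps / 2 by nra.
have hp := Hd sg; have hm := Hd (- sg).
rewrite normrN gtr0_norm // in hm; rewrite gtr0_norm // in hp.
have {hp}hp := hp sN; have {hm}hm := hm sN.
have A : 0 <= sg * (c / 2 + e * N / 2 + q / 2).
  by move: hp; congr (0 <= _); rewrite /q; field; rewrite gt_eqF.
have B : 0 <= sg * (- c / 2 + e * N / 2 + q / 2).
  by move: hm; congr (0 <= _); rewrite /q; field; rewrite gt_eqF.
rewrite pmulr_rge0 // in A; rewrite pmulr_rge0 // in B.
apply/ler_normlP; split; lra.
Qed.
End Real2.

Section ELs.
Variables (R : realType) (d : nat) (rho0 : probability (BRd R d) R).
Local Notation V := (BRd R d).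
Local Notation inH := (inH rho0).
Local Notation ip := (ipH rho0).
Local Notation nm := (normH rho0).

Lemma EL (F : (V -> V) -> R) (G : (V -> V) -> V -> V) tau Xn Y :
  frechet_gradient_on_H rho0 F G -> 0 < tau -> inH Xn ->
  unique_minimizer_H rho0 (scheme_objective rho0 F G tau Xn) Y ->
  nm (addH (subH Y Xn) (scaleH (tau / 2) (addH (G Y) (G Xn)))) = 0.
Proof.
move=> hF t0 hXn [hY [hmin _]].
have [hGY frY] := hF Y hY; have [hGX _] := hF Xn hXn.
have hD : inH (subH Y Xn) by apply: inH_sub.
set D := subH Y Xn in hD *.
set w := addH (addH (G Y) (G Xn)) (scaleH (2 / tau) D).
have hw : inH w by apply: inH_add; [apply: inH_add|apply: inH_scale].
have cE : ip w w = ip (G Y) w + ip (G Xn) w + 2 / tau * ip D w.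
  have hGG : inH (addH (G Y) (G Xn)) by apply: inH_add.
  have hsD := inH_scale (2 / tau) hD.
  rewrite {1}/w (ipD (a:=addH (G Y) (G Xn))) //.
  by rewrite (ipD (a:=G Y)) // (ipZ (2 / tau) (a:=D)).
have key : ip w w = 0.
  apply: (@EL_core _ _ (nm w) (ip w w) tau).
  - exact: nm_ge0.
  - exact: ip_ge0.
  - exact: t0.
  move=> e e0; have [del d0 Hdel] := frY e e0; exists del => // s hs.
  have hsw : inH (scaleH s w) by apply: inH_scale.
  have hYs : inH (addH Y (scaleH s w)) by apply: inH_add.
  have hm := hmin _ hYs.
  have hfr := Hdel (scaleH s w) hsw ltac:(by rewrite nmZ).
  rewrite nmZ // (ipZr s (a:=w) (c:=G Y)) // in hfr.
  rewrite /scheme_objective in hm.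
  rewrite (ipDr (a:=Y) (b:=scaleH s w) (c:=G Xn)) // (ipZr s (a:=w) (c:=G Xn)) // in hm.
  have eD : subH (addH Y (scaleH s w)) Xn = addH D (scaleH s w) by rewrite /D; veq.
  rewrite eD in hm.
  rewrite !nm_sq (ip_expand (a:=D) s (h:=w)) // in hm.
  set Fs := F (addH Y (scaleH s w)) in hm hfr.
  move/ler_normlP: hfr => [hf1 hf2].
  rewrite cE.
  have eq1 : 1 / 2 * Fs + 1 / 2 * (ip (G Xn) Y + s * ip (G Xn) w) +
     1 / (2 * tau) * (ip D D + 2 * s * ip D w + s ^+ 2 * ip w w)
     - (1 / 2 * F Y + 1 / 2 * ip (G Xn) Y + 1 / (2 * tau) * ip D D)
     = 1 / 2 * (Fs - F Y - s * ip (G Y) w)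
       + s / 2 * (ip (G Y) w + ip (G Xn) w + 2 / tau * ip D w)
       + s ^+ 2 * ip w w / (2 * tau).
    by field; rewrite gt_eqF.
  rewrite -cE in eq1 *.
  have := nm_ge0 w; have := normr_ge0 s; have := e0.
  rewrite -/D in hm.
  set N := nm w in hf1 hf2 *; set P := ip w w in eq1 hm *.
  set c2 := s / 2 * P in eq1 *.
  set c3 := s ^+ 2 * P / (2 * tau) in eq1 *.
  move=> *; lra.
have -> : addH (subH Y Xn) (scaleH (tau / 2) (addH (G Y) (G Xn))) =
  scaleH (tau / 2) w.
  apply/funext => x; apply/matrixP => i j.
  rewrite /w /D /addH /subH /scaleH !mxE; field; by rewrite gt_eqF.
by rewrite nmZ // (nm0_ip hw key) mulr0.
Qed.
End ELs.
Arguments EL {R d rho0 F G tau Xn Y}.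



Section Conv.
Variables (R : realType) (d : nat) (rho0 : probability (BRd R d) R).
Local Notation V := (BRd R d).
Local Notation inH := (inH rho0).
Local Notation ip := (ipH rho0).
Local Notation nm := (normH rho0).
Variables (F : (V -> V) -> R) (G : (V -> V) -> V -> V) (lam : R).
Hypothesis hF : frechet_gradient_on_H rho0 F G.
Hypothesis hC : lambda_convex_on_H rho0 lam F.

Lemma ipBl a b c : inH a -> inH b -> inH c -> ip (subH a b) c = ip a c - ip b c.
Proof.
move=> ha hb hc; rewrite subHE (ipD (a:=a)) //; last exact: inH_scale.
by rewrite (ipZ (-1) (a:=b)) // mulN1r.
Qed.

Lemma SG xi eta : inH xi -> inH eta ->
  F xi + ip (G xi) (subH eta xi) + lam / 2 * nm (subH eta xi) ^+ 2 <= F eta.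
Proof.
move=> hxi heta.
have hu : inH (subH eta xi) by apply: inH_sub.
set u := subH eta xi in hu *.
set e := nm u.
have e0 : 0 <= e by apply: nm_ge0.
have [hGx frx] := hF xi hxi.
rewrite -addrA -lerBrDl; apply/ler_addgt0Pr => th th0.
set eps := th / (2 * (e + 1)).
have eps0 : 0 < eps by rewrite divr_gt0 //; lra.
have epsE : eps * (2 * (e + 1)) = th by rewrite /eps divfK //; lra.
have [del d0 Hd] := frx eps eps0.
set w1 := del / (2 * (e + 1)).
have w10 : 0 < w1 by rewrite divr_gt0 //; lra.
have w1E : w1 * (2 * (e + 1)) = del by rewrite /w1 divfK //; lra.
set w2 := th / (`|lam| * e ^+ 2 + 1).
have l0 : 0 < `|lam| * e ^+ 2 + 1 by have := normr_ge0 lam; nra.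
have w20 : 0 < w2 by rewrite divr_gt0.
have w2E : w2 * (`|lam| * e ^+ 2 + 1) = th by rewrite /w2 divfK // gt_eqF.
set s := Num.min 1 (Num.min w1 w2).
have s0 : 0 < s by rewrite !lt_min ltr01 w10 w20.
have s1 : s <= 1 by rewrite ge_min lexx.
have s2 : s <= w1 by rewrite /s !ge_min lexx !orbT.
have s3 : s <= w2 by rewrite /s !ge_min lexx !orbT.
have hsu : inH (scaleH s u) by apply: inH_scale.
have hc := hC _ _ hxi heta s ltac:(by rewrite (ltW s0) s1).
have eqv : addH (scaleH (1 - s) xi) (scaleH s eta) = addH xi (scaleH s u).
  by rewrite /u; veq.
rewrite eqv (nm_subC (a:=xi) (b:=eta)) // -/u -/e in hc.
have nsu : nm (scaleH s u) = s * e by rewrite nmZ // gtr0_norm.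
have hlt : nm (scaleH s u) < del by rewrite nsu; nra.
have := Hd _ hsu hlt; rewrite nsu (ipZr s (a:=u) (c:=G xi)) //.
move=> /ler_normlP [h1 _].
have hl : lam / 2 * s * e ^+ 2 <= `|lam| * s * e ^+ 2 / 2.
  have := ler_norm lam; have : 0 <= s * e ^+ 2 by nra. nra.
have key : s * (ip (G xi) u + lam / 2 * e ^+ 2) <=
           s * (F eta - F xi + eps * e + lam / 2 * s * e ^+ 2).
  nra.
rewrite ler_pM2l // in key.
have h3 : eps * e <= th / 2 by nra.
have h4 : `|lam| * s * e ^+ 2 <= th.
  have := normr_ge0 lam; have : 0 <= e ^+ 2 by nra. nra.
lra.
Qed.

Lemma Gcont xi : inH xi -> forall eps, 0 < eps -> exists2 rho, 0 < rho &
  forall eta, inH eta -> nm (subH eta xi) < rho -> nm (subH (G eta) (G xi)) <= eps.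
Proof.
move=> hxi eps e0.
have [hGx frx] := hF xi hxi.
have [del d0 Hd] := frx (eps / 4) ltac:(by rewrite divr_gt0).
have l0 : 0 < 5 * `|lam| + 1 by have := normr_ge0 lam; lra.
set r := Num.min (del / 2) (eps / (5 * `|lam| + 1)).
have r0 : 0 < r by rewrite lt_min !divr_gt0.
have r1 : r < del.
  have : r <= del / 2 by rewrite /r ge_min lexx.
  lra.
have r2 : r * (5 * `|lam| + 1) <= eps.
  rewrite -ler_pdivlMr //; by rewrite /r ge_min lexx orbT.
exists (r / 2); first by rewrite divr_gt0.
move=> eta heta he.
have [hGe _] := hF eta heta.
have hv : inH (subH (G eta) (G xi)) by apply: inH_sub.
set v := subH (G eta) (G xi) in hv *.
set Vn := nm v.
have V0 : 0 <= Vn by apply: nm_ge0.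
have [Vz|Vp] := eqVneq Vn 0; first by rewrite Vz ltW.
have Vp' : 0 < Vn by rewrite lt_def Vp V0.
have hh : inH (scaleH (r / Vn) v) by apply: inH_scale.
set h := scaleH (r / Vn) v in hh.
have nh : nm h = r by rewrite /h nmZ // gtr0_norm ?divr_gt0 // divfK // gt_eqF.
have hxh : inH (addH xi h) by apply: inH_add.
have hu : inH (subH eta xi) by apply: inH_sub.
set u := subH eta xi in hu he.
set e := nm u in he.
have e0' : 0 <= e by apply: nm_ge0.
have := Hd h hh ltac:(by rewrite nh); rewrite nh => /ler_normlP [_ ha].
have hb := SG _ _ heta hxh.
have hc := SG _ _ hxi heta; rewrite -/u -/e in hc.
have eq1 : subH (addH xi h) eta = addH h (scaleH (-1) u) by rewrite /u; veq.
have hsu := inH_scale (-1) hu.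
rewrite eq1 (ipDr (a:=h) (b:=scaleH (-1) u)) // in hb.
rewrite (ipZr (-1) (a:=u) (c:=G eta)) // in hb.
set m := nm (addH h (scaleH (-1) u)) in hb.
have hm : m <= r + e.
  rewrite /m; apply: (le_trans (nm_add hh (inH_scale (-1) hu))).
  by rewrite nmZ // nh normrN1 mul1r.
have m0 : 0 <= m by apply: nm_ge0.
have ipvh : ip (G eta) h - ip (G xi) h = r * Vn.
  rewrite -(ipBl _ _ _ hGe hGx hh) /h (ipZr (r / Vn) (a:=v) (c:=v)) // -nm_sq -/Vn.
  by field; rewrite Vp.
have ipvu : ip (G eta) u - ip (G xi) u <= Vn * e.
  rewrite -(ipBl _ _ _ hGe hGx hu); apply: (le_trans (ler_norm _)); exact: CS.
have lamb : - (lam / 2 * (e ^+ 2 + m ^+ 2)) <= `|lam| / 2 * (e ^+ 2 + m ^+ 2).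
  have := ler_norm (- lam); rewrite normrN.
  have : 0 <= e ^+ 2 + m ^+ 2 by nra. nra.
have sq : e ^+ 2 + m ^+ 2 <= 5 / 2 * r ^+ 2 by nra.
have main : r * Vn <= eps / 4 * r + Vn * e + `|lam| / 2 * (5 / 2 * r ^+ 2).
  have := normr_ge0 lam; nra.
have main2 : r * Vn / 2 <= eps / 4 * r + 5 / 4 * `|lam| * r ^+ 2 by nra.
have : r * (Vn - eps) <= 0.
  have := normr_ge0 lam; nra.
by rewrite pmulr_rle0 // subr_le0.
Qed.
End Conv.
Arguments ipBl {R d rho0 a b c}.
Arguments SG {R d rho0 F G lam}. Arguments Gcont {R d rho0 F G lam}.

Lemma seq_small (R : realType) (u : nat -> R) : u @ \oo --> 0 ->
  forall e, 0 < e -> exists N, forall n, (N <= n)%N -> `|u n| < e.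
Proof.
move/cvgrPdist_lt => H e e0; have [N _ HN] := H e e0.
by exists N => n hn; have := HN n hn; rewrite /= sub0r normrN.
Qed.



Section Arith.
Variable R : realType.
Lemma h_b01 (a b t : R) : 0 <= a -> a <= t -> t <= b -> b - a < 1 -> 0 <= b <= t + 1.
Proof. by move=> *; apply/andP; split; lra. Qed.
Lemma h_a01 (a t : R) : 0 <= a -> a <= t -> 0 <= a <= t + 1.
Proof. by move=> *; apply/andP; split; lra. Qed.
Lemma h_n01 (x y b t : R) : 0 <= x -> x <= y -> y <= b -> b <= t + 1 -> 0 <= x <= t + 1.
Proof. by move=> *; apply/andP; split; lra. Qed.
Lemma h_MT (M m T a b : R) : M * T <= b -> a < m * T + T -> (M - m) * T <= b - a + T.
Proof. by move=> *; lra. Qed.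
Lemma h_abs (M m T a b : R) : M * T <= b -> b < M * T + T -> m * T <= a -> a < m * T + T ->
  `|b - a - (M - m) * T| <= T.
Proof. by move=> *; apply/ler_normlP; split; lra. Qed.
Lemma h_d (nT t a b mT T : R) : 0 <= T -> nT <= b -> t <= b -> mT <= nT -> a < mT + T -> a <= t ->
  `|nT - t| <= b - a + T.
Proof. by move=> *; apply/ler_normlP; split; lra. Qed.
Lemma arith1 (n4 n3 n2 nM nZ q ng eta0 th ba T eps : R) :
  n4 <= n3 + n2 -> n3 <= nM + nZ -> nM <= eta0 -> n2 <= eta0 -> nZ <= q ->
  q <= (ba + T) * eps -> eta0 <= th / 4 -> T * (ng + eps) <= th / 2 ->
  n4 + T * ng <= ba * eps + th.
Proof. by move=> *; lra. Qed.
End Arith.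
Arguments h_b01 {R a b t}. Arguments h_a01 {R a t}. Arguments h_n01 {R x y b t}. Arguments h_MT {R M m T a b}. Arguments h_abs {R M m T a b}. Arguments h_d {R nT t a b mT T}. Arguments arith1 {R n4 n3 n2 nM nZ q ng eta0 th ba T eps}.

Section Main.
Variables (R : realType) (d : nat) (rho0 : probability (BRd R d) R).
Local Notation V := (BRd R d).
Local Notation inH := (inH rho0).
Local Notation ip := (ipH rho0).
Local Notation nm := (normH rho0).
Variables (F : (V -> V) -> R) (G : (V -> V) -> V -> V) (lam : R).
Variables (tau : nat -> R) (Xs : nat -> nat -> V -> V) (X : R -> V -> V).
Hypothesis hF : frechet_gradient_on_H rho0 F G.
Hypothesis hC : lambda_convex_on_H rho0 lam F.
Hypothesis htau : forall k, 0 < tau k.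
Hypothesis htau0 : tau @ \oo --> (0 : R).
Hypothesis hX0 : forall k, inH (Xs k 0%N).
Hypothesis hmin : forall k n, unique_minimizer_H rho0
      (scheme_objective rho0 F G (tau k) (Xs k n)) (Xs k n.+1).
Hypothesis hXt : forall t, 0 <= t -> inH (X t).
Hypothesis hLip : forall T : R, 0 < T -> exists L : R, forall s t, 0 <= s <= T -> 0 <= t <= T ->
      nm (subH (X t) (X s)) <= L * `|t - s|.
Hypothesis hcv : forall T : R, 0 < T -> forall eps : R, 0 < eps -> exists K : nat,
      forall k, (K <= k)%N -> forall t, 0 <= t <= T ->
        nm (subH (interp (tau k) (Xs k) t) (X t)) <= eps.

Lemma Xs_in k n : inH (Xs k n).
Proof. by case: n => [|n] //; case: (hmin k n). Qed.

Lemma interp_nat k n : interp (tau k) (Xs k) (n%:R * tau k) = Xs k n.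
Proof. by rewrite /interp mulfK ?gt_eqF // natrK. Qed.

Lemma step_bound k n g eps : inH g ->
  nm (subH (G (Xs k n.+1)) g) <= eps -> nm (subH (G (Xs k n)) g) <= eps ->
  nm (addH (subH (Xs k n.+1) (Xs k n)) (scaleH (tau k) g)) <= tau k * eps.
Proof.
move=> hg h1 h2.
have hEL := EL hF (htau k) (Xs_in k n) (hmin k n).
have [hG1 _] := hF _ (Xs_in k n.+1); have [hG0 _] := hF _ (Xs_in k n).
have hA : inH (addH (subH (Xs k n.+1) (Xs k n)) (scaleH (tau k / 2) (addH (G (Xs k n.+1)) (G (Xs k n))))).
  apply: inH_add; first by apply: inH_sub; apply: Xs_in.
  by apply: inH_scale; apply: inH_add.
have hB : inH (addH (subH (G (Xs k n.+1)) g) (subH (G (Xs k n)) g)).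
  by apply: inH_add; apply: inH_sub.
have -> : addH (subH (Xs k n.+1) (Xs k n)) (scaleH (tau k) g) =
  addH (addH (subH (Xs k n.+1) (Xs k n)) (scaleH (tau k / 2) (addH (G (Xs k n.+1)) (G (Xs k n)))))
       (scaleH (- (tau k / 2)) (addH (subH (G (Xs k n.+1)) g) (subH (G (Xs k n)) g))).
  apply/funext => x; apply/matrixP => i j.
  by rewrite /addH /subH /scaleH !mxE; field.
apply: (le_trans (nm_add hA (inH_scale (- (tau k / 2)) hB))).
rewrite hEL add0r nmZ // normrN gtr0_norm ?divr_gt0 //.
have := nm_add (inH_sub hG1 hg) (inH_sub hG0 hg).
have := htau k; move=> t0 hle.
have : tau k / 2 * nm (addH (subH (G (Xs k n.+1)) g) (subH (G (Xs k n)) g)) <= tau k / 2 * (eps + eps).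
  by apply: ler_wpM2l; [rewrite divr_ge0 // ltW|lra].
lra.
Qed.

Lemma nm_zero a g : inH g -> nm (addH (subH a a) (scaleH 0 g)) = 0.
Proof.
move=> hg; have -> : addH (subH a a) (scaleH 0 g) = scaleH 0 g by veq.
by rewrite nmZ // normr0 mul0r.
Qed.

Lemma chain k g eps m M : inH g -> 0 <= eps ->
  (forall n, (m <= n <= M)%N -> nm (subH (G (Xs k n)) g) <= eps) ->
  forall j, (m + j <= M)%N ->
  nm (addH (subH (Xs k (m + j)) (Xs k m)) (scaleH (j%:R * tau k) g)) <= j%:R * tau k * eps.
Proof.
move=> hg e0 hb; elim=> [|j IH] hj.
  by rewrite addn0 mul0r nm_zero // mul0r.
have hj' : (m + j <= M)%N by rewrite (leq_trans _ hj) // leq_add2l.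
have hZ : inH (addH (subH (Xs k (m + j)) (Xs k m)) (scaleH (j%:R * tau k) g)).
  by apply: inH_add; [apply: inH_sub; apply: Xs_in|apply: inH_scale].
have hS : inH (addH (subH (Xs k (m + j).+1) (Xs k (m + j))) (scaleH (tau k) g)).
  by apply: inH_add; [apply: inH_sub; apply: Xs_in|apply: inH_scale].
have -> : addH (subH (Xs k (m + j.+1)) (Xs k m)) (scaleH (j.+1%:R * tau k) g) =
  addH (addH (subH (Xs k (m + j)) (Xs k m)) (scaleH (j%:R * tau k) g))
       (addH (subH (Xs k (m + j).+1) (Xs k (m + j))) (scaleH (tau k) g)).
  by rewrite addnS -natr1; veq.
apply: (le_trans (nm_add hZ hS)).
have b1 : (m <= (m + j).+1 <= M)%N.
  by apply/andP; split; [rewrite ltnW // ltnS leq_addr|move: hj; rewrite addnS].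
have b2 : (m <= m + j <= M)%N by rewrite leq_addr hj'.
have h2 := step_bound k (m + j) g eps hg (hb _ b1) (hb _ b2).
have h1 := IH hj'.
rewrite -natr1; lra.
Qed.

Lemma window t : 0 < t -> forall eps, 0 < eps -> exists2 del, 0 < del &
  forall a b, 0 <= a -> a <= t -> t <= b -> b - a < del ->
  nm (addH (subH (X b) (X a)) (scaleH (b - a) (G (X t)))) <= (b - a) * eps.
Proof.
move=> t0 eps e0.
have hxi := hXt _ (ltW t0).
have [hg _] := hF _ hxi.
have [rho r0 Hrho] := Gcont hF hC _ hxi _ e0.
have [L HL] := hLip (t + 1) ltac:(lra).
set L' := `|L| + 1.
have L'0 : 0 < L' by rewrite /L'; have := normr_ge0 L; lra.
have HL' : forall s t', 0 <= s <= t + 1 -> 0 <= t' <= t + 1 ->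
    nm (subH (X t') (X s)) <= L' * `|t' - s|.
  move=> s t' hs ht'; apply: (le_trans (HL s t' hs ht')).
  apply: ler_wpM2r => //; rewrite /L'; have := ler_norm L; lra.
set w := rho / (4 * L').
have w0 : 0 < w by rewrite divr_gt0 // mulr_gt0.
have wE : w * (4 * L') = rho by rewrite /w divfK // gt_eqF // mulr_gt0.
exists (Num.min 1 w); first by rewrite lt_min ltr01 w0.
move=> a b a0 hat tb hba.
have db1 : b - a < 1 by move: hba; rewrite lt_min => /andP[].
have db2 : b - a < w by move: hba; rewrite lt_min => /andP[].
apply/ler_addgt0Pr => th th0.
set eta0 := Num.min (th / 4) (rho / 4).
have eta00 : 0 < eta0 by rewrite lt_min !divr_gt0.
have eta1 : eta0 <= th / 4 by rewrite /eta0 ge_min lexx.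
have eta2 : eta0 <= rho / 4 by rewrite /eta0 ge_min lexx orbT.
have [K1 HK1] := hcv (t + 1) ltac:(lra) eta0 eta00.
have ng0 : 0 <= nm (G (X t)) := nm_ge0 _.
set c := 2 * (nm (G (X t)) + eps + 1).
have c0 : 0 < c by rewrite /c; lra.
set tau0 := Num.min w (th / c).
have tau00 : 0 < tau0 by rewrite lt_min w0 divr_gt0.
have tau01 : tau0 <= w by rewrite /tau0 ge_min lexx.
have tau02 : tau0 * c <= th by rewrite -ler_pdivlMr // /tau0 ge_min lexx orbT.
have [K2 HK2] := seq_small _ _ htau0 _ tau00.
set k := maxn K1 K2.
have hk1 : (K1 <= k)%N by rewrite leq_maxl.
have hk2 : (K2 <= k)%N by rewrite leq_maxr.
have tk : 0 < tau k := htau k.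
have tk0 : tau k < tau0 by have := HK2 k hk2; rewrite gtr0_norm.
set T := tau k in tk tk0.
have aT0 : 0 <= a / T by rewrite divr_ge0 // ltW.
have bT0 : 0 <= b / T by rewrite divr_ge0 //; lra.
set m := Num.truncn (a / T); set M := Num.truncn (b / T).
have /andP [ma1 ma2] := truncn_itv aT0.
have /andP [Mb1 Mb2] := truncn_itv bT0.
rewrite -/m in ma1 ma2; rewrite -/M in Mb1 Mb2.
rewrite ler_pdivlMr // in ma1; rewrite ltr_pdivrMr // in ma2.
rewrite ler_pdivlMr // in Mb1; rewrite ltr_pdivrMr // in Mb2.
rewrite -natr1 mulrDl mul1r in ma2.
rewrite -natr1 mulrDl mul1r in Mb2.
have mM : (m <= M)%N by apply: le_truncn; apply: ler_wpM2r; [rewrite invr_ge0 ltW|lra].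
have Gnear : forall n, (m <= n <= M)%N -> nm (subH (G (Xs k n)) (G (X t))) <= eps.
  move=> n /andP [h1 h2]; apply: Hrho; first exact: Xs_in.
  have n1 : m%:R <= n%:R :> R by rewrite ler_nat.
  have n2 : n%:R <= M%:R :> R by rewrite ler_nat.
  have nT0 : 0 <= n%:R * T by rewrite mulr_ge0 // ltW.
  have nT1 : n%:R * T <= M%:R * T by rewrite ler_wpM2r // ltW.
  have nT2 : m%:R * T <= n%:R * T by rewrite ler_wpM2r // ltW.
  have bt1 := h_b01 a0 hat tb db1.
  have hc := HK1 k hk1 (n%:R * T) (h_n01 nT0 nT1 Mb1 (proj2 (andP bt1))).
  have nTb : n%:R * T <= b by apply: le_trans Mb1.
  rewrite interp_nat in hc.
  have hl := HL' t (n%:R * T) (h_a01 (ltW t0) (lexx t)) (h_n01 nT0 nT1 Mb1 (proj2 (andP bt1))).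
  have hd : `|n%:R * T - t| <= b - a + T := h_d (ltW tk) nTb tb nT2 ma2 hat.
  have hlt : L' * `|n%:R * T - t| < rho / 2.
    have h6 : L' * `|n%:R * T - t| <= L' * (b - a + T) by rewrite ler_wpM2l // ltW.
    have h7 : b - a + T < 2 * w by lra.
    have h8 : L' * (b - a + T) < L' * (2 * w) by rewrite ltr_pM2l.
    have h9 : L' * (2 * w) = rho / 2 by rewrite -wE; field.
    by rewrite -h9; apply: le_lt_trans h8.
  have ht := nm_tri (Xs_in k n) (hXt _ nT0) hxi.
  apply: (le_lt_trans ht); apply: (le_lt_trans (lerD hc hl)).
  have h10 : eta0 + rho / 2 < rho.
    by move: eta2 r0; generalize eta0 rho => x y; lra.
  by apply: le_lt_trans h10; rewrite lerD2l; apply: ltW.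
have hj : (m + (M - m) <= M)%N by rewrite subnKC.
have hZ := chain k (G (X t)) eps m M hg (ltW e0) Gnear (M - m)%N hj.
rewrite subnKC // natrB // in hZ.
have bt1 := h_b01 a0 hat tb db1.
have cM := HK1 k hk1 b bt1.
have cm := HK1 k hk1 a (h_a01 a0 hat).
rewrite /interp -/T -/M in cM; rewrite /interp -/T -/m in cm.
have hXa := hXt _ a0; have hXb := hXt b (proj1 (andP bt1)).
have hXM := Xs_in k M; have hXm := Xs_in k m.
have hZin : inH (addH (subH (Xs k M) (Xs k m)) (scaleH ((M%:R - m%:R) * T) (G (X t)))).
  by apply: inH_add; [apply: inH_sub|apply: inH_scale].
have -> : addH (subH (X b) (X a)) (scaleH (b - a) (G (X t))) =
  addH (addH (addH (subH (X b) (Xs k M))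
    (addH (subH (Xs k M) (Xs k m)) (scaleH ((M%:R - m%:R) * T) (G (X t)))))
    (subH (Xs k m) (X a))) (scaleH ((b - a) - (M%:R - m%:R) * T) (G (X t))).
  by veq.
have i1 : inH (subH (X b) (Xs k M)) by apply: inH_sub.
have i2 : inH (subH (Xs k m) (X a)) by apply: inH_sub.
have i3 := inH_add i1 hZin.
have i4 := inH_add i3 i2.
apply: (le_trans (nm_add i4 (inH_scale _ hg))).
rewrite nmZ //.
have e1 := nm_add i3 i2; have e2 := nm_add i1 hZin.
rewrite nm_subC // in e2.
have hab : `|b - a - (M%:R - m%:R) * T| <= T := h_abs Mb1 Mb2 ma1 ma2.
have hh : `|b - a - (M%:R - m%:R) * T| * nm (G (X t)) <= T * nm (G (X t)).
  by rewrite ler_wpM2r.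
have hM : (M%:R - m%:R) * T * eps <= (b - a + T) * eps.
  by apply: ler_wpM2r; [exact: ltW e0|exact: h_MT Mb1 ma2].
have hT : T * (nm (G (X t)) + eps) <= th / 2.
  have h1 : T * c <= tau0 * c by rewrite ler_wpM2r // ltW.
  move: h1 tau02; rewrite /c; generalize (nm (G (X t))) => y; move=> *; lra.
apply: (le_trans (lerD (lexx _) hh)).
exact: (arith1 e1 e2 cM cm hZ hM eta1 hT).
Qed.

Lemma Xderiv t : 0 < t -> time_deriv_H rho0 X t (scaleH (-1) (G (X t))).
Proof.
move=> t0 eps e0; have [del d0 Hw] := window _ t0 _ e0.
exists del => // h /andP [h0 hd] th0.
have hxt := hXt _ (ltW t0); have [hg _] := hF _ hxt; have hXth := hXt _ th0.
have [hp|hn] := ltP 0 h.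
  have -> : subH (subH (X (t + h)) (X t)) (scaleH h (scaleH (-1) (G (X t)))) =
    addH (subH (X (t + h)) (X t)) (scaleH (t + h - t) (G (X t))) by veq.
  have := Hw t (t + h) (ltW t0) (lexx t) ltac:(lra) ltac:(rewrite gtr0_norm in hd; lra).
  by rewrite gtr0_norm // (_ : t + h - t = h) //; [rewrite mulrC | ring].
have hneg : h < 0.
  by rewrite lt_neqAle hn andbT -normr_gt0.
have -> : subH (subH (X (t + h)) (X t)) (scaleH h (scaleH (-1) (G (X t)))) =
  scaleH (-1) (addH (subH (X t) (X (t + h))) (scaleH (t - (t + h)) (G (X t)))) by veq.
rewrite nmZ; last by apply: inH_add; [apply: inH_sub|apply: inH_scale].
have -> : `|(-1 : R)| = 1 by rewrite normrN1.
rewrite mul1r.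
have := Hw (t + h) t th0 ltac:(lra) (lexx t) ltac:(rewrite ltr0_norm in hd; lra).
by rewrite ltr0_norm // (_ : t - (t + h) = - h) //; [rewrite mulrC | ring].
Qed.

Lemma X0_id (hId : inH (@IdH R d)) :
  (fun k => nm (subH (Xs k 0%N) (@IdH R d))) @ \oo --> (0 : R) ->
  nm (subH (X 0) (@IdH R d)) = 0.
Proof.
move=> hcI; apply/eqP; rewrite eq_le nm_ge0 andbT.
apply/ler_addgt0Pr => eps e0; rewrite add0r.
have [K1 HK1] := hcv 1 ltr01 (eps / 2) ltac:(by rewrite divr_gt0).
have [K2 HK2] := seq_small _ _ hcI (eps / 2) ltac:(by rewrite divr_gt0).
set k := maxn K1 K2.
have h1 := HK1 k (leq_maxl _ _) 0 ltac:(by rewrite lexx ler01).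
rewrite /interp mul0r (natrK 0) in h1.
have h2 := HK2 k (leq_maxr _ _); rewrite ger0_norm ?nm_ge0 // in h2.
have hX0' := hXt _ (lexx 0).
apply: (le_trans (nm_tri hX0' (Xs_in k 0) hId)).
rewrite nm_subC // ?Xs_in //.
have : eps / 2 + eps / 2 = eps by field.
lra.
Qed.
End Main.



Lemma lac_of_lip (R : realType) (d : nat) (rho0 : probability (BRd R d) R)
  (X : R -> BRd R d -> BRd R d) :
  (forall T : R, 0 < T -> exists L : R, forall s t, 0 <= s <= T -> 0 <= t <= T ->
      normH rho0 (subH (X t) (X s)) <= L * `|t - s|) ->
  loc_abs_cont_H rho0 X.
Proof.
move=> hLip T T0 eps e0; have [L HL] := hLip T T0.
set L' := `|L| + 1.
have L'0 : 0 < L' by rewrite /L'; have := normr_ge0 L; lra.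
exists (eps / L'); first by rewrite divr_gt0.
move=> n a b hab _ hs.
apply: (le_lt_trans (y := \sum_(i < n) L' * (b i - a i))).
  apply: ler_sum => i _.
  have [h1 [h2 h3]] := hab i (ltn_ord i).
  have := HL (a i) (b i) ltac:(apply/andP; split; lra) ltac:(apply/andP; split; lra).
  move=> h; apply: (le_trans h); rewrite ger0_norm; last lra.
  apply: ler_wpM2r; first lra.
  by rewrite /L'; have := ler_norm L; lra.
by rewrite -mulr_sumr mulrC -ltr_pdivlMr.
Qed.

Theorem mainTheorem15 (R : realType) (d : nat)
  (rho0 : probability (BRd R d) R)
  (phi : (set (BRd R d) -> \bar R) -> R)
  (G : (BRd R d -> BRd R d) -> (BRd R d -> BRd R d))
  (lam : R)
  (tau : nat -> R)
  (Xs : nat -> nat -> BRd R d -> BRd R d)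
  (X : R -> BRd R d -> BRd R d) :
  (* standing hypotheses (S) *)
  finite_second_moment rho0 ->
  frechet_gradient_on_H rho0 (phi_lift rho0 phi) G ->
  lambda_convex_on_H rho0 lam (phi_lift rho0 phi) ->
  (exists m : R, forall xi, inH rho0 xi -> m <= phi_lift rho0 phi xi) ->
  (* the family of time steps tau_k -> 0 *)
  (forall k, 0 < tau k) ->
  (tau @ \oo --> (0 : R)) ->
  (forall k, 0 < lam / 2 + 1 / tau k) ->
  (lam < 0 -> forall k, `|lam| * tau k < 1) ->
  (* the scheme *)
  (forall k, inH rho0 (Xs k 0%N)) ->
  (forall k n, unique_minimizer_H rho0
      (scheme_objective rho0 (phi_lift rho0 phi) G (tau k) (Xs k n)) (Xs k n.+1)) ->
  (* initial data *)
  ((fun k => normH rho0 (subH (Xs k 0%N) (@IdH R d))) @ \oo --> (0 : R)) ->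
  (exists M : R, forall k, normH rho0 (G (Xs k 0%N)) <= M) ->
  (* X : [0,oo) -> H is locally Lipschitz *)
  (forall t, 0 <= t -> inH rho0 (X t)) ->
  (forall T : R, 0 < T -> exists L : R, forall s t, 0 <= s <= T -> 0 <= t <= T ->
      normH rho0 (subH (X t) (X s)) <= L * `|t - s|) ->
  (* locally uniform convergence of the interpolants to X *)
  (forall T : R, 0 < T -> forall eps : R, 0 < eps -> exists K : nat,
      forall k, (K <= k)%N -> forall t, 0 <= t <= T ->
        normH rho0 (subH (interp (tau k) (Xs k) t) (X t)) <= eps) ->
  (* conclusion *)
  loc_abs_cont_H rho0 X /\
  {ae (@lebesgue_measure R), forall t : R, 0 < t ->
      time_deriv_H rho0 X t (scaleH (-1) (G (X t)))} /\
  normH rho0 (subH (X 0) (@IdH R d)) = 0.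
Proof.
move=> hfsm hF hC _ htau htau0 hlt hlt2 hX0 hmin hcI _ hXt hLip hcv.
split; first exact: lac_of_lip.
split.
  apply: aeW => t t0.
  exact: (@Xderiv R d rho0 (phi_lift rho0 phi) G lam tau Xs X hF hC htau htau0
            hX0 hmin hXt hLip hcv t t0).
have hId : inH rho0 (@IdH R d).
  by split; [exact: measurable_id|exact: hfsm].
exact: (@X0_id R d rho0 (phi_lift rho0 phi) G tau Xs X hX0 hmin hXt hcv hId hcI).
Qed.
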